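(* For every $k\ge1$ and every partition $\tau$ of size $k$ that avoids $122$, the pair $\{122,\tau\}$ is Wilf-equivalent to the pair $\{112,12\cdots k\}$; that is, $p_n(122,\tau)=p_n(112,12\cdots k)$ for all $n\ge0$.
   Context: Set partitions of $[n]$ are represented by canonical sequential forms (restricted growth words $\pi_1\cdots\pi_n$ with $\pi_1=1$ and $\pi_{i+1}\le \max(\pi_1,\dots,\pi_i)+1$; $\pi_j$ is the index of the block of $j$, blocks ordered by minima). $\pi$ contains a pattern $\tau$ if some subsequence of $\pi$ is order-isomorphic to $\tau$, otherwise avoids it. $p_n(T)$ is the number of partitions of $[n]$ avoiding every pattern of $T$. The size of a partition is its length. *)

(* Defs.v *)
From mathcomp Require Import all_boot.
Set Implicit Arguments. Unset Strict Implicit. Unset Printing Implicit Defensive.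

(* Set partitions of [n] as canonical sequential forms (restricted growth words),
   1-based: pi_1 = 1 and pi_{i+1} <= max(pi_1..pi_i) + 1.  The empty word is the
   unique partition of the empty set. *)
Fixpoint rgf_from (m : nat) (s : seq nat) : bool :=
  match s with
  | [::] => true
  | a :: s' => [&& 0 < a, a <= m.+1 & rgf_from (maxn m a) s']
  end.

(* pi_1 = 1 is forced by rgf_from 0: 0 < a <= 1. *)
Definition is_rgf (s : seq nat) : bool := rgf_from 0 s.

Definition order_iso (u v : seq nat) : bool :=
  (size u == size v) &&
  [forall i : 'I_(size u), forall j : 'I_(size u),
     ((nth 0 u i < nth 0 u j) == (nth 0 v i < nth 0 v j)) &&
     ((nth 0 u i == nth 0 u j) == (nth 0 v i == nth 0 v j))].

Definition contains (s t : seq nat) : bool :=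
  [exists m : (size s).-tuple bool, order_iso (mask m s) t].

Definition avoids (s t : seq nat) : bool := ~~ contains s t.

(* The partition of [n] encoded by a word w of length n over {0..n-1}, shifted by 1 *)
Definition word_of (n : nat) (w : n.-tuple 'I_n) : seq nat := [seq (val i).+1 | i <- w].

(* p_n(T): number of partitions of [n] avoiding every pattern in T.
   (Every RGF of length n has entries in {1..n}, so all are enumerated.) *)
Definition p_n (n : nat) (T : seq (seq nat)) : nat :=
  #|[set w : n.-tuple 'I_n | is_rgf (word_of w) && all (avoids (word_of w)) T]|.

Definition incr_pat (k : nat) : seq nat := iota 1 k.

(* Main.v *)
Require Import Defs.
From mathcomp Require Import all_boot zify.
Set Implicit Arguments. Unset Strict Implicit. Unset Printing Implicit Defensive.

Fixpoint encB (m : nat) (b : seq bool) : seq nat :=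
  match b with [::] => [::] | x :: b' => if x then m.+1 :: encB m.+1 b' else 1 :: encB m b' end.
Fixpoint emit (L : nat) (b : seq bool) : seq nat :=
  match b with [::] => [::] | x :: b' => if x then emit L.-1 b' else L :: emit L b' end.
Definition dec2 (b : seq bool) := iota 1 (count id b).+1 ++ emit (count id b).+1 b.
Fixpoint enc2 (L : nat) (d : seq nat) : seq bool :=
  match d with [::] => nseq L.-1 true | x :: d' => nseq (L - x) true ++ false :: enc2 x d' end.
Fixpoint bseqs n : seq (seq bool) :=
  if n is n'.+1 then map (cons false) (bseqs n') ++ map (cons true) (bseqs n') else [:: [::]].
Fixpoint W (u : seq nat) : bool :=
  if u is x :: u' then [&& 0 < x, (x != 1) ==> all (fun y => (y != 1) ==> (x < y)) u' & W u'] else true.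

Lemma order_isoP u v : reflect (size u = size v /\ forall i j, i < size u -> j < size u ->
   ((nth 0 u i < nth 0 u j) = (nth 0 v i < nth 0 v j)) /\
   ((nth 0 u i == nth 0 u j) = (nth 0 v i == nth 0 v j))) (order_iso u v).
Proof.
apply: (iffP andP) => [[/eqP hs /forallP H]|[hs H]]; split => //.
- move=> i j hi hj; have /forallP /(_ (Ordinal hj)) /andP [/eqP a /eqP b] := H (Ordinal hi).
  by split.
- by rewrite hs.
- apply/forallP => i; apply/forallP => j.
  by case: (H i j (ltn_ord i) (ltn_ord j)) => a b; rewrite a b !eqxx.
Qed.

Lemma containsP s t : reflect (exists2 u, subseq u s & order_iso u t) (contains s t).
Proof.
apply: (iffP existsP) => [[m h]|[u /subseqP [m sm ->] h]].
  by exists (mask m s) => //; apply: mask_subseq.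
by exists (Tuple (introT eqP sm)).
Qed.

Lemma oi_size u v : order_iso u v -> size u = size v.
Proof. by case/order_isoP. Qed.

Lemma oi_uniq u v : order_iso u v -> uniq v -> uniq u.
Proof.
case/order_isoP => hs H /(uniqP 0) U; apply/(uniqP 0) => i j hi hj e.
have [_ b] := H i j hi hj; apply: U; rewrite ?inE -?hs //.
by apply/eqP; rewrite -b e.
Qed.

Lemma oi_refl u : order_iso u u.
Proof. by apply/order_isoP; split. Qed.

Lemma contains_sub s s' t : subseq s s' -> contains s t -> contains s' t.
Proof.
move=> ss /containsP [u su h]; apply/containsP; exists u => //.
exact: subseq_trans su ss.
Qed.

Lemma avoids_rcons s a t : avoids (rcons s a) t -> avoids s t.
Proof.
apply: contra; apply: contains_sub; exact: subseq_rcons.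
Qed.

Lemma avoids_nil t : 0 < size t -> avoids [::] t.
Proof.
move=> st; apply/negP => /containsP [u]; rewrite subseq0 => /eqP -> /oi_size /= h.
by rewrite -h in st.
Qed.

Lemma oi112 x y : x < y -> order_iso [:: x; x; y] [:: 1; 1; 2].
Proof.
move=> xy; apply/order_isoP; split => // i j.
move: i j => [|[|[|i]]] [|[|[|j]]] //= _ _;
rewrite ?ltnn ?eqxx ?xy ?(ltn_eqF xy) ?(gtn_eqF xy) ?(leq_gtF (ltnW xy)) //.
Qed.

Lemma oi122 x y : x < y -> order_iso [:: x; y; y] [:: 1; 2; 2].
Proof.
move=> xy; apply/order_isoP; split => // i j.
move: i j => [|[|[|i]]] [|[|[|j]]] //= _ _;
rewrite ?ltnn ?eqxx ?xy ?(ltn_eqF xy) ?(gtn_eqF xy) ?(leq_gtF (ltnW xy)) //.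
Qed.

Lemma oi112E u : order_iso u [:: 1; 1; 2] -> exists x y, u = [:: x; x; y] /\ x < y.
Proof.
move=> h; have := oi_size h; case/order_isoP: h => _ H.
case: u H => [|a [|b [|c [|]]]] //= H _.
have [_ e] := H 0 1 isT isT; have [l _] := H 1 2 isT isT.
move: e l => /= /eqP -> l; by exists b, c; split => //; rewrite l.
Qed.

Lemma oi122E u : order_iso u [:: 1; 2; 2] -> exists x y, u = [:: x; y; y] /\ x < y.
Proof.
move=> h; have := oi_size h; case/order_isoP: h => _ H.
case: u H => [|a [|b [|c [|]]]] //= H _.
have [l _] := H 0 1 isT isT; have [_ e] := H 1 2 isT isT.
move: e l => /= /eqP -> l; by exists a, c; split => //; rewrite l.
Qed.

Lemma contains_iota_le s k M : all (fun x => 0 < x <= M) s -> contains s (iota 1 k) -> k <= M.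
Proof.
move=> /allP A /containsP [u su h].
have U := oi_uniq h (iota_uniq 1 k).
rewrite -(size_iota 1 k) -(oi_size h) -(size_iota 1 M); apply: uniq_leq_size => // x xu.
have /A /andP [x0 xM] := mem_subseq su xu.
by rewrite mem_iota; apply/andP; split; lia.
Qed.

Lemma rgf_cat m s t : rgf_from m (s ++ t) = rgf_from m s && rgf_from (foldl maxn m s) t.
Proof. by elim: s m => [|x s IH] m //=; rewrite IH !andbA. Qed.

Lemma rgf_range m s : rgf_from m s -> all (fun x => 0 < x <= m + size s) s.
Proof.
elim: s m => [|x s IH] m //= /and3P [x0 xm /IH H]; rewrite x0 /=; apply/andP; split.
  lia.
apply: sub_all H => y /andP [y0 ym]; rewrite y0 /=; move: ym; rewrite /maxn; case: ifP; lia.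
Qed.

Lemma foldl_max_le m s M : m <= M -> all (fun x => x <= M) s -> foldl maxn m s <= M.
Proof.
elim: s m => [|x s IH] m //= mM /andP [xM H]; apply: IH => //; rewrite geq_max mM xM //.
Qed.

Lemma foldl_max_eq m s : all (fun x => x <= m) s -> foldl maxn m s = m.
Proof. by elim: s => [|x s IH] //= /andP [xm H]; rewrite (maxn_idPl xm) IH. Qed.

Lemma rgf_const m d : all (fun x => 0 < x <= m) d -> rgf_from m d.
Proof.
elim: d => [|x d IH] //= /andP [/andP [x0 xm] H]; rewrite x0 (leq_trans xm) //.
by rewrite (maxn_idPl xm) IH.
Qed.

Lemma rgf_iota m j : rgf_from m (iota m.+1 j) /\ foldl maxn m (iota m.+1 j) = m + j.
Proof.
elim: j m => [|j IH] m /=; first by rewrite addn0.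
have -> : maxn m m.+1 = m.+1 by apply/maxn_idPr.
case: (IH m.+1) => -> ->; split => //; lia.
Qed.

Lemma rgf_rcons m s a : rgf_from m (rcons s a) = rgf_from m s && (0 < a <= (foldl maxn m s).+1).
Proof. by rewrite -cats1 rgf_cat /= andbT. Qed.

Lemma subseq_catE (T : eqType) (u s1 s2 : seq T) : subseq u (s1 ++ s2) ->
  exists u1 u2, [/\ u = u1 ++ u2, subseq u1 s1 & subseq u2 s2].
Proof.
elim: s1 u => [|y s1 IH] u /=.
  by move=> h; exists [::], u; split.
case: u => [|x u]; first by move=> _; exists [::], [::]; rewrite !sub0seq.
case: eqP => [->|ne] h.
  have [u1 [u2 [-> h1 h2]]] := IH _ h; exists (y :: u1), u2; split => //=.
  by rewrite eqxx.
have [u1 [u2 [e h1 h2]]] := IH _ h; exists u1, u2; split => //.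
exact: subseq_trans h1 (subseq_cons _ _).
Qed.

Lemma subseq_nseq j b : subseq (nseq j true) b = (j <= count id b).
Proof.
elim: b j => [|x b IH] [|j] //=; rewrite ?sub0seq //.
case: x; rewrite /= ?IH //.
by rewrite add0n -(IH j.+1).
Qed.

Lemma size_encB m b : size (encB m b) = size b.
Proof. by elim: b m => [|[] b IH] m //=; rewrite IH. Qed.

Lemma map_encB m b : 0 < m -> map (fun x => x != 1) (encB m b) = b.
Proof.
elim: b m => [|[] b IH] m m0 //=; rewrite IH //.
by rewrite eqSS -lt0n m0.
Qed.

Lemma encB_range m b : 0 < m -> all (fun x => 0 < x <= m + count id b) (encB m b).
Proof.
elim: b m => [|[] b IH] m m0 //=.
  rewrite add1n addnS ltnS leq_addr /=.
  by rewrite -addSn; exact: IH.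
rewrite add0n; apply/andP; split; first lia.
exact: IH.
Qed.

Lemma encB_W m b : 0 < m -> W (encB m b) && all (fun y => (y != 1) ==> (m < y)) (encB m b).
Proof.
elim: b m => [|[] b IH] m m0 //=.
  have /andP [h1 h2] := IH m.+1 isT; rewrite h1 h2 !implybT /=.
  apply/andP; split; first by apply/implyP. by apply: sub_all h2 => y /implyP h; apply/implyP => /h; lia.
by have /andP [h1 h2] := IH m m0; rewrite h1 h2.
Qed.

Lemma W_enc b : W (1 :: encB 1 b).
Proof. by have /andP [h _] := encB_W b (isT : 0 < 1); rewrite /= h. Qed.

Lemma rgf_encB m b : 0 < m -> rgf_from m (encB m b).
Proof.
elim: b m => [|[] b IH] m m0 //=.
  rewrite ltnSn /=; have -> : maxn m m.+1 = m.+1 by apply/maxn_idPr.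
  exact: IH.
have -> : maxn m 1 = m by apply/maxn_idPl.
exact: IH.
Qed.

Lemma is_rgf_enc b : is_rgf (1 :: encB 1 b).
Proof. by rewrite /is_rgf /=; apply: rgf_encB. Qed.

Lemma encB_rcons m b x :
  encB m (rcons b x) = rcons (encB m b) (if x then (m + count id b).+1 else 1).
Proof.
elim: b m => [|[] b IH] m /=; first by case: x; rewrite ?addn0.
  by rewrite IH add1n addnS addSn.
by rewrite IH add0n.
Qed.

Lemma encB_mem m b a : 0 < m -> m < a <= m + count id b -> a \in encB m b.
Proof.
elim: b m => [|[] b IH] m m0 /=; first lia.
  rewrite inE; case: eqP => //= ne h; apply: IH => //; lia.
rewrite add0n inE => h; rewrite (IH m) ?orbT //.
Qed.

Lemma encB_nseq m j : encB m (nseq j true) = iota m.+1 j.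
Proof. by elim: j m => [|j IH] m //=; rewrite IH. Qed.

Lemma W_sub t u : W t -> subseq u t -> W u.
Proof.
elim: t u => [|y t IH] u /=; first by move=> _; case: u.
case/and3P => y0 hy Wt; case: u => [|x u] //.
case: eqP => [->|ne] h /=.
  rewrite y0 (IH u) // andbT; apply/implyP => /(implyP hy) /allP H.
  by apply/allP => z /(mem_subseq h) /H.
exact: IH h.
Qed.

Lemma W_pos u i : W u -> i < size u -> 0 < nth 0 u i.
Proof.
elim: u i => [|x u IH] [|i] //= /and3P [x0 _ Wu] hi //; exact: IH.
Qed.

Lemma W_lt u i j : W u -> i < j -> j < size u -> nth 0 u i != 1 -> nth 0 u j != 1 ->
  nth 0 u i < nth 0 u j.
Proof.
elim: u i j => [|x u IH] [|i] [|j] //= /and3P [x0 hx Wu] ij js n1 n2.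
  move: hx; rewrite n1 => /allP /(_ (nth 0 u j)); rewrite mem_nth // n2; apply => //.
exact: IH.
Qed.

Lemma oi_W u v : W u -> W v -> map (fun x => x != 1) u = map (fun x => x != 1) v ->
  order_iso u v.
Proof.
move=> Wu Wv e; have hs : size u = size v by rewrite -(size_map (fun x => x != 1) u) e size_map.
apply/order_isoP; split => // i j hi hj.
have hi' : i < size v by rewrite -hs.
have hj' : j < size v by rewrite -hs.
have ei : (nth 0 u i != 1) = (nth 0 v i != 1).
  by move: (nth_map 0 true (fun x : nat => x != 1) hi) (nth_map 0 true (fun x : nat => x != 1) hi') => /= <- <-; rewrite e.
have ej : (nth 0 u j != 1) = (nth 0 v j != 1).
  by move: (nth_map 0 true (fun x : nat => x != 1) hj) (nth_map 0 true (fun x : nat => x != 1) hj') => /= <- <-; rewrite e.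
have pui := W_pos Wu hi; have puj := W_pos Wu hj.
have pvi := W_pos Wv hi'; have pvj := W_pos Wv hj'.
case: (nth 0 u i =P 1) ei => [ui /esym/negbFE/eqP vi|/eqP ui /esym vi];
case: (nth 0 u j =P 1) ej => [uj /esym/negbFE/eqP vj|/eqP uj /esym vj].
- by rewrite ui uj vi vj.
- have h1 : forall x, 0 < x -> x != 1 -> 1 < x by move=> x; lia.
  rewrite ui vi (h1 _ puj uj) (h1 _ pvj vj) ![1 == _]eq_sym (negbTE uj) (negbTE vj).
  by split.
- rewrite uj vj (negbTE ui) (negbTE vi) !ltnS !leqn0 !eqn0Ngt pui pvi.
  by split.
case: (ltngtP i j) => [ij|ji|->]; last by rewrite !eqxx !ltnn.
  have a := W_lt Wu ij hj ui uj; have b := W_lt Wv ij hj' vi vj.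
  by rewrite a b (ltn_eqF a) (ltn_eqF b); split.
have a := W_lt Wu ji hi uj ui; have b := W_lt Wv ji hi' vj vi.
by rewrite (leq_gtF (ltnW a)) (leq_gtF (ltnW b)) (gtn_eqF a) (gtn_eqF b); split.
Qed.

Lemma avoids122_enc b : avoids (1 :: encB 1 b) [:: 1; 2; 2].
Proof.
apply/negP => /containsP [u su /oi122E [x [y [ue xy]]]].
have := W_sub (W_enc b) su; rewrite ue /= => /and3P [x0 _ /and3P [_ hy _]].
have yn : (y != 1) by lia.
by move: hy; rewrite yn /= ltnn.
Qed.

Lemma all_true_nseq (c : seq bool) : ~~ (false \in c) -> c = nseq (size c) true.
Proof. by elim: c => [|[] c IH] //=; rewrite inE /= => /IH <-. Qed.

Lemma enc_range b : all (fun x => 0 < x <= 1 + count id b) (1 :: encB 1 b).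
Proof. by apply/andP; split; [lia | apply: encB_range]. Qed.

Lemma contains_enc b c : contains (1 :: encB 1 b) (1 :: encB 1 c) = subseq c b.
Proof.
apply/idP/idP.
- case/containsP => u su h.
  case: (boolP (false \in c)) => [fc|fc].
  + have hs := oi_size h.
    have tm : map (fun x => x != 1) (1 :: encB 1 c) = false :: c by rewrite /= map_encB.
    have jl : (index false c).+1 < size u by rewrite hs /= size_encB ltnS index_mem.
    have tj : nth 0 (1 :: encB 1 c) (index false c).+1 = 1.
      have : nth true (map (fun x => x != 1) (1 :: encB 1 c)) (index false c).+1 = false.
        by rewrite tm /= nth_index.
      by rewrite (nth_map 0) -?hs // => /negbFE/eqP.
    case/order_isoP: h => _ H.
    have hu0 : 0 < size u by rewrite hs.
    have [_ e0] := H 0 _ hu0 jl; rewrite tj /= eqxx in e0.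
    have Wu := W_sub (W_enc b) su.
    have u0 : nth 0 u 0 = 1.
      apply/eqP; apply/negP => /negP hn.
      have hj : nth 0 u (index false c).+1 != 1 by rewrite -(eqP e0).
      by have := W_lt Wu (ltn0Sn _) jl hn hj; rewrite -(eqP e0) ltnn.
    have mu : map (fun x => x != 1) u = false :: c.
      rewrite -tm; apply: (@eq_from_nth _ true); rewrite ?size_map //.
      move=> i hi; rewrite !(nth_map 0) -?hs //.
      have [_ ei] := H 0 i hu0 hi.
      have k1 : forall x, (x != 1) = (x != nth 0 u 0) by rewrite u0.
      have k2 : forall x, (x != 1) = (x != nth 0 (1 :: encB 1 c) 0) by [].
      by rewrite (k1 (nth 0 u i)) (k2 (nth 0 (1 :: encB 1 c) i)) ![nth 0 _ i == _]eq_sym ei.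
    have := map_subseq (fun x => x != 1) su; rewrite mu /= map_encB //=.
  + have ec := all_true_nseq fc; rewrite ec subseq_nseq.
    move: h; rewrite ec encB_nseq => h.
    have : contains (1 :: encB 1 b) (iota 1 (size c).+1) by apply/containsP; exists u.
    move/(contains_iota_le (enc_range b)); rewrite size_nseq; lia.
- case/subseqP => [m sm ->]; apply/containsP.
  exists (mask (true :: m) (1 :: encB 1 b)); first exact: mask_subseq.
  apply: oi_W; first exact: W_sub (W_enc b) (mask_subseq _ _).
    exact: W_enc.
  by rewrite map_mask /= !map_encB.
Qed.

Lemma struct122 s : is_rgf s -> avoids s [:: 1; 2; 2] -> s = [::] \/ exists b, s = 1 :: encB 1 b.
Proof.
elim/last_ind: s => [|s a IH]; first by left.
rewrite /is_rgf rgf_rcons => /andP [rs /andP [a0 am]] av; right.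
case: (IH rs (avoids_rcons av)) => [es|[b eb]].
  by subst s; exists [::]; have -> : a = 1 by move: am => /=; lia.
subst s.
have M : foldl maxn 0 (1 :: encB 1 b) <= 1 + count id b.
  apply: foldl_max_le => //; apply: sub_all (enc_range b) => x /andP [].
  by [].
case: (a =P 1) => [->|a1].
  by exists (rcons b false); rewrite encB_rcons rcons_cons.
case: (a =P (count id b).+2) => [->|a2].
  by exists (rcons b true); rewrite encB_rcons rcons_cons add1n.
exfalso; have ma : a \in encB 1 b by apply: encB_mem => //; lia.
move/negP: av; apply; apply/containsP; exists [:: 1; a; a]; last by apply: oi122; lia.
rewrite -cats1 /= -[[:: a; a]]/([:: a] ++ [:: a]) cat_subseq //.
by rewrite sub1seq.
Qed.

Lemma geqT : transitive geq.
Proof. by move=> y x z /= h1 h2; exact: leq_trans h2 h1. Qed.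

Lemma sorted_rcons_geq d a : sorted geq (rcons d a) = sorted geq d && (a <= last a d).
Proof. by case: d => [|x d] /=; rewrite ?leqnn ?rcons_path. Qed.

Lemma emit_le L b : all (fun x => x <= L) (emit L b).
Proof.
elim: b L => [|[] b IH] L //=; last by rewrite leqnn IH.
by apply: sub_all (IH L.-1) => x /= h; exact: leq_trans h (leq_pred L).
Qed.

Lemma emit_range L b : count id b < L -> all (fun x => 0 < x <= L) (emit L b).
Proof.
elim: b L => [|[] b IH] L //= h.
  apply: sub_all (IH L.-1 _) => [x /= /andP [-> h2]|]; last lia.
  exact: leq_trans h2 (leq_pred L).
rewrite leqnn andbT IH //; lia.
Qed.

Lemma emit_sorted L b : sorted geq (emit L b).
Proof.
elim: b L => [|[] b IH] L //=.
rewrite (path_sortedE geqT) IH andbT; exact: emit_le.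
Qed.

Lemma size_emit L b : size (emit L b) + count id b = size b.
Proof.
elim: b L => [|[] b IH] L //=; first by rewrite add1n addnS IH.
by rewrite add0n addSn IH.
Qed.

Lemma avoid112_form M d : sorted geq d -> avoids (iota 1 M ++ d) [:: 1; 1; 2].
Proof.
move=> sd; apply/negP => /containsP [u su /oi112E [x [y [ue xy]]]]; subst u.
have [u1 [u2 [e h1 h2]]] := subseq_catE su.
have U1 := subseq_uniq h1 (iota_uniq 1 M).
have S2 := subseq_sorted geqT h2 sd.
move: e U1 S2; clear h1 h2 su; case: u1 => [|a [|b [|c [|? ?]]]] //=.
- by move=> <- _ /andP [_ /andP [h _]]; lia.
- by case=> _ <- _ /andP [h _]; lia.
- by case=> <- <- _; rewrite inE eqxx.
- by case=> <- <- _; rewrite !inE eqxx.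
Qed.

Lemma all_dec2 b : all (fun x => 0 < x <= (count id b).+1) (dec2 b).
Proof.
rewrite all_cat emit_range // andbT; apply/allP => x; rewrite mem_iota; lia.
Qed.

Lemma dec2_rgf b : is_rgf (dec2 b).
Proof.
rewrite /is_rgf /dec2 rgf_cat; case: (rgf_iota 0 (count id b).+1) => -> ->.
by rewrite add0n; apply: rgf_const; apply: emit_range.
Qed.

Lemma dec2_avoid b : avoids (dec2 b) [:: 1; 1; 2].
Proof. exact: avoid112_form (emit_sorted _ _). Qed.

Lemma dec2_iota b k : contains (dec2 b) (iota 1 k) = (k <= (count id b).+1).
Proof.
apply/idP/idP; first exact: contains_iota_le (all_dec2 b).
move=> kc; apply/containsP; exists (iota 1 k); last exact: oi_refl.
apply: subseq_trans (prefix_subseq _ _).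
by rewrite -(subnKC kc) iotaD prefix_subseq.
Qed.

Lemma size_dec2 b : size (dec2 b) = (size b).+1.
Proof. by rewrite size_cat size_iota -(size_emit (count id b).+1 b); lia. Qed.

Lemma emit_nseq L j b : emit L (nseq j true ++ b) = emit (L - j) b.
Proof.
elim: j L => [|j IH] L /=; first by rewrite subn0.
by rewrite IH; congr emit; lia.
Qed.

Lemma count_enc2 L d : sorted geq d -> all (fun x => 0 < x <= L) d ->
  count id (enc2 L d) = L.-1.
Proof.
elim: d L => [|x d IH] L /=; first by rewrite count_nseq mul1n.
move=> sd /andP [/andP [x0 xL] hd].
have hx := order_path_min geqT sd.
rewrite count_cat count_nseq mul1n /= add0n IH //; first lia.
  by move: sd; rewrite (path_sortedE geqT) => /andP [].
apply/allP => y yd; have /allP := hx; move/(_ y yd) => /= yx.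
by have /allP /(_ y yd) /andP [-> _] := hd.
Qed.

Lemma emit_enc2 L d : sorted geq d -> all (fun x => 0 < x <= L) d -> emit L (enc2 L d) = d.
Proof.
elim: d L => [|x d IH] L /=; first by rewrite -[nseq _ _]cats0 emit_nseq.
move=> sd /andP [/andP [x0 xL] hd].
have hx := order_path_min geqT sd.
rewrite emit_nseq /= subKn // IH //.
  by move: sd; rewrite (path_sortedE geqT) => /andP [].
apply/allP => y yd; have /allP := hx; move/(_ y yd) => /= yx.
by have /allP /(_ y yd) /andP [-> _] := hd.
Qed.

Lemma dec2_enc2 M d : 0 < M -> sorted geq d -> all (fun x => 0 < x <= M) d ->
  dec2 (enc2 M d) = iota 1 M ++ d.
Proof.
move=> M0 sd hd; rewrite /dec2 count_enc2 // prednK // emit_enc2 //.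
Qed.

Lemma enc2_true L e : 1 < L -> all (fun x => x <= L.-1) e -> enc2 L e = true :: enc2 L.-1 e.
Proof.
case: e => [|x e] /= L1.
  by move=> _; have -> : L.-1 = (L.-1).-1.+1 by lia.
case/andP => xL _; have -> : L - x = (L.-1 - x).+1 by lia.
by [].
Qed.

Lemma enc2_emit L b : 0 < L -> count id b = L.-1 -> enc2 L (emit L b) = b.
Proof.
elim: b L => [|[] b IH] L /= L0.
- by move=> h; rewrite -h.
- rewrite add1n => h; rewrite enc2_true; [|lia|exact: emit_le].
  by rewrite IH //; lia.
- by rewrite add0n subnn => h; rewrite IH.
Qed.

Lemma dec2_inj : injective dec2.
Proof.
pose g s := enc2 (foldl maxn 0 s) (drop (foldl maxn 0 s) s).
apply: (can_inj (g := g)) => b; rewrite /g /dec2 foldl_cat.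
case: (rgf_iota 0 (count id b).+1) => _ ->; rewrite add0n foldl_max_eq ?emit_le //.
by rewrite drop_size_cat ?size_iota // enc2_emit.
Qed.

Lemma struct112 s : is_rgf s -> avoids s [:: 1; 1; 2] ->
  exists M d, [/\ s = iota 1 M ++ d, sorted geq d & all (fun x => 0 < x <= M) d].
Proof.
elim/last_ind: s => [|s a IH]; first by exists 0, [::].
rewrite /is_rgf rgf_rcons => /andP [rs /andP [a0 am]] av.
have [M [d [es sd hd]]] := IH rs (avoids_rcons av); subst s.
have aM : a <= M.+1.
  apply: leq_trans am _; rewrite ltnS; apply: foldl_max_le => //.
  rewrite all_cat; apply/andP; split; first by apply/allP => x; rewrite mem_iota; lia.
  by apply: sub_all hd => x /andP [].
move: av; clear rs IH am; case/lastP: d sd hd => [|d' e] sd hd av.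
  case: (a =P M.+1) => [->|aM1].
    exists M.+1, [::]; split => //.
    have -> : iota 1 M.+1 = iota 1 M ++ [:: M.+1].
      by rewrite -(addn1 M) iotaD /=; congr (_ ++ [:: _]); lia.
    by rewrite !cats0 cats1.
  exists M, [:: a]; split; [by rewrite cats0 cats1| by [] | rewrite /= andbT; lia].
have he : 0 < e <= M by move: hd; rewrite all_rcons => /andP [].
case: (leqP a e) => [ae|ea].
  exists M, (rcons (rcons d' e) a); split.
  - by rewrite rcons_cat.
  - by rewrite sorted_rcons_geq sd last_rcons.
  - rewrite all_rcons hd andbT; lia.
exfalso; move/negP: av; apply; apply/containsP; exists [:: e; e; a]; last exact: oi112.
rewrite -!cats1 -catA -[[:: e; e; a]]/([:: e] ++ ([:: e] ++ [:: a])).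
apply: cat_subseq; first by rewrite sub1seq mem_iota; lia.
apply: cat_subseq => //; by rewrite sub1seq mem_cat mem_head orbT.
Qed.

Definition PT (T : seq (seq nat)) (s : seq nat) := is_rgf s && all (avoids s) T.

Lemma val_pmap_ord n (t : seq nat) : all (fun x => x < n) t ->
  map val (pmap (insub : nat -> option 'I_n) t) = t.
Proof.
elim: t => //= x t IH /andP [xn ht].
case: insubP => [u _ ux|/negP //]; by rewrite /= ux IH.
Qed.

Lemma p_nE n T L : uniq L -> (forall s, s \in L -> size s = n) ->
  (forall s, PT T s -> size s = n -> s \in L) -> p_n n T = count (PT T) L.
Proof.
move=> uL hL1 hL2.
rewrite /p_n cardE -(size_map (@word_of n)) -size_filter.
apply: perm_size; apply: uniq_perm.
- rewrite map_inj_uniq ?enum_uniq //.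
  have fi : injective (fun i : 'I_n => (val i).+1) by move=> i j [] /val_inj.
  move=> w1 w2; rewrite /word_of => e; apply: val_inj; apply: (inj_map fi). exact: e.
- exact: filter_uniq.
move=> s; rewrite mem_filter; apply/mapP/andP.
- case=> w; rewrite mem_enum inE => hw ->; split => //.
  by apply: hL2 => //; rewrite size_map size_tuple.
case=> hP hs; have sz := hL1 s hs.
have hr := rgf_range (proj1 (andP hP)); rewrite add0n sz in hr.
set t := map predn s.
have ht : all (fun x => x < n) t.
  by rewrite all_map; apply: sub_all hr => x /andP [x0 xn] /=; lia.
have hsz : size (pmap (insub : nat -> option 'I_n) t) == n.
  by rewrite size_pmap_sub; move: ht; rewrite all_count => /eqP ->; rewrite /t size_map sz.
have ew : word_of (Tuple hsz) = s.
  rewrite /word_of /= (_ : [seq (nat_of_ord i).+1 | i <- pmap (insub : nat -> option 'I_n) t] = map succn (map val (pmap (insub : nat -> option 'I_n) t))); last by rewrite -map_comp.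
  rewrite val_pmap_ord // /t -map_comp.
  rewrite map_id_in // => x xs; have /allP /(_ x xs) /andP [x0 _] := hr; exact: prednK.
by exists (Tuple hsz); rewrite ?mem_enum ?inE ew.
Qed.

Lemma mem_bseqs n b : (b \in bseqs n) = (size b == n).
Proof.
have nf : forall (y z : bool) (B : seq (seq bool)) c, y != z -> (y :: c \in map (cons z) B) = false.
  by move=> y z B c yz; apply/mapP => [[w _ [e _]]]; rewrite e eqxx in yz.
have ci : forall x : bool, injective (cons x) by move=> x ? ? [].
elim: n b => [|n IH] [|x b] //=.
  rewrite mem_cat; apply/negP; case/orP => /mapP [y _] //.
rewrite mem_cat eqSS -IH; case: x.
  by rewrite (nf true false) // mem_map.
by rewrite (nf false true) // mem_map // orbF.
Qed.

Lemma bseqs_uniq n : uniq (bseqs n).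
Proof.
have ci : forall x : bool, injective (cons x) by move=> x ? ? [].
elim: n => [|n IH] //=; rewrite cat_uniq !map_inj_uniq // IH andbT /=.
by apply/hasP => [[l /mapP [w _ ->] /mapP [w' _ []]]].
Qed.

Lemma count_bseqs_cons n x t : count (fun b => ~~ subseq (x :: t) b) (bseqs n.+1) =
  count (fun b => ~~ subseq t b) (bseqs n) + count (fun b => ~~ subseq (x :: t) b) (bseqs n).
Proof.
rewrite /= count_cat !count_map; case: x; [rewrite addnC|]; congr (_ + _);
by apply: eq_count => b /=.
Qed.

Lemma count_subseq_size n t1 t2 : size t1 = size t2 ->
  count (fun b => ~~ subseq t1 b) (bseqs n) = count (fun b => ~~ subseq t2 b) (bseqs n).
Proof.
elim: n t1 t2 => [|n IH] [|x1 t1] [|x2 t2] //= e.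
by rewrite !count_bseqs_cons (IH t1 t2) ?(IH (x1 :: t1) (x2 :: t2)) //; case: e.
Qed.

Theorem corollary2p14 (k : nat) (tau : seq nat) :
  1 <= k -> size tau = k -> is_rgf tau -> avoids tau [:: 1; 2; 2] ->
  forall n : nat,
    p_n n [:: [:: 1; 2; 2]; tau] = p_n n [:: [:: 1; 1; 2]; incr_pat k].
Proof.
move=> k1 stau rt atau n.
case: (struct122 rt atau) => [et|[c et]]; first by rewrite et /= in stau; lia.
have sc : size c = k.-1 by rewrite -stau et /= size_encB.
case: n => [|n].
  have L0 : forall T, p_n 0 T = count (PT T) [:: [::]].
    move=> T; apply: p_nE => //; first by move=> s; rewrite inE => /eqP ->.
    by move=> s _ /size0nil ->; rewrite inE.
  by rewrite !L0 /= /PT /= !avoids_nil // ?stau // /incr_pat size_iota.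

rewrite (p_nE (L := map (fun b => 1 :: encB 1 b) (bseqs n))); first last.
- move=> s /andP [rs /andP [a122 _]] ss.
  case: (struct122 rs a122) => [es|[b eb]]; first by rewrite es in ss.
  rewrite eb; apply: map_f; rewrite mem_bseqs; rewrite eb /= size_encB in ss.
  by case: ss => ->.
- by move=> s /mapP [b bb ->]; rewrite /= size_encB; move: bb; rewrite mem_bseqs => /eqP ->.
- rewrite map_inj_uniq ?bseqs_uniq // => b1 b2 [] e.
  by rewrite -(map_encB b1 (isT : 0 < 1)) e map_encB.
rewrite (p_nE (L := map dec2 (bseqs n))); first last.
- move=> s /andP [rs /andP [a112 _]] ss.
  have [M [d [es sd hd]]] := struct112 rs a112.
  case: M es hd => [|M] es hd.
    case: d es hd sd => [|x d] es hd sd; first by rewrite es in ss.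
    by move: hd => /= /andP [/andP [x0 x1] _]; lia.
  have ed := dec2_enc2 (ltn0Sn M) sd hd; rewrite es -ed; apply: map_f.
  by rewrite mem_bseqs; move: ss; rewrite es -ed size_dec2 => [[->]].
- by move=> s /mapP [b bb ->]; rewrite size_dec2; move: bb; rewrite mem_bseqs => /eqP ->.
- by rewrite map_inj_uniq ?bseqs_uniq //; exact: dec2_inj.
rewrite !count_map.
rewrite (eq_count (a2 := fun b => ~~ subseq c b)); last first.
  by move=> b /=; rewrite /PT /= is_rgf_enc avoids122_enc et /avoids contains_enc andbT.
rewrite [in RHS](eq_count (a2 := fun b => ~~ subseq (nseq k.-1 true) b)); last first.
  move=> b /=; rewrite /PT /= dec2_rgf dec2_avoid /avoids /incr_pat dec2_iota andbT /=.
  by rewrite subseq_nseq -(prednK k1) ltnS.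
by apply: (@count_subseq_size n c (nseq k.-1 true)); rewrite size_nseq.
Qed.
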